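(* Let $\chi:\mathbb{R}_+\to\mathbb{R}$ be a Lipschitz function. The function $X:\mathcal Q_2(\mathbb{R}_+)\to\mathbb{R}$, $X(\mathsf q)=\int_0^1\chi(\mathsf q(u))\,\mathrm du$, is $\mathcal Q_2(\mathbb{R}_+)^*$-nondecreasing if and only if $\chi$ is nondecreasing and convex.
   Context: $\mathcal Q_2(\mathbb{R}_+)$ is the set of nondecreasing, right-continuous (with left limits) functions $\mathsf q:[0,1)\to\mathbb{R}_+$ that belong to $L^2([0,1),\mathbb{R})$. Its dual cone is $\mathcal Q_2(\mathbb{R}_+)^*=\{\mathsf p\in L^2([0,1),\mathbb{R}):\langle\mathsf p,\mathsf q\rangle_{L^2}\ge0$ for all $\mathsf q\in\mathcal Q_2(\mathbb{R}_+)\}$. A function $\mathsf g:\mathcal Q_2(\mathbb{R}_+)\to\mathbb{R}$ is $\mathcal Q_2(\mathbb{R}_+)^*$-nondecreasing if $\mathsf g(\mathsf q)\le\mathsf g(\mathsf q')$ whenever $\mathsf q,\mathsf q'\in\mathcal Q_2(\mathbb{R}_+)$ and $\mathsf q'-\mathsf q\in\mathcal Q_2(\mathbb{R}_+)^*$. *)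

(* Defs.v *)
From HB Require Import structures.
From mathcomp Require Import all_boot all_order all_algebra.
From mathcomp Require Import all_classical all_reals all_analysis.
Set Implicit Arguments. Unset Strict Implicit. Unset Printing Implicit Defensive.
Import Order.TTheory GRing.Theory Num.Theory.
Import numFieldNormedType.Exports.
Local Open Scope classical_set_scope.
Local Open Scope ring_scope.

Section Q2.
Variable R : realType.

Local Notation mu := (@lebesgue_measure R).

Definition I01 : set R := `[0%R, 1%R[%classic.

(* f : [0,1) -> R belongs to L^2([0,1)) (functions are represented on R,
   only their values on [0,1) matter) *)
Definition inL2 (f : R -> R) : Prop :=
  measurable_fun I01 f /\
  (\int[mu]_(x in I01) ((f x) ^+ 2)%:E < +oo)%E.

Definition L2inner (p q : R -> R) : R :=
  \int[mu]_(u in I01) (p u * q u).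

Definition inQ2 (q : R -> R) : Prop :=
  [/\ (forall u v, u \in I01 -> v \in I01 -> u <= v -> q u <= q v),
      (forall u, u \in I01 -> q x @[x --> u^'+] --> q u),
      (forall u, 0 < u < 1 -> cvg (q x @[x --> u^'-])),
      (forall u, u \in I01 -> 0 <= q u)
    & inL2 q].

Definition inQ2dual (p : R -> R) : Prop :=
  inL2 p /\ forall q, inQ2 q -> 0 <= L2inner p q.

Definition Q2dual_nondecreasing (g : (R -> R) -> R) : Prop :=
  forall q q', inQ2 q -> inQ2 q' -> inQ2dual (q' \- q) -> g q <= g q'.

Definition Xfun (chi : R -> R) (q : R -> R) : R :=
  \int[mu]_(u in I01) chi (q u).

(* properties of chi : R_+ -> R (represented on R, only values on [0,oo) matter) *)
Definition lipschitz_Rplus (chi : R -> R) : Prop :=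
  exists L : R, forall x y, 0 <= x -> 0 <= y -> `|chi x - chi y| <= L * `|x - y|.

Definition nondecreasing_Rplus (chi : R -> R) : Prop :=
  forall x y, 0 <= x -> x <= y -> chi x <= chi y.

Definition convex_Rplus (chi : R -> R) : Prop :=
  forall x y t, 0 <= x -> 0 <= y -> 0 <= t <= 1 ->
    chi (t * x + (1 - t) * y) <= t * chi x + (1 - t) * chi y.

End Q2.

(* Main.v *)
Require Import Defs.
From HB Require Import structures.
From mathcomp Require Import all_boot all_order all_algebra.
From mathcomp Require Import all_classical all_reals all_analysis.
From mathcomp Require Import ring lra measurable_realfun.
Import Order.TTheory GRing.Theory Num.Theory.
Import numFieldNormedType.Exports.
Local Open Scope classical_set_scope.
Local Open Scope ring_scope.
Set Implicit Arguments. Unset Strict Implicit. Unset Printing Implicit Defensive.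

Section Aux.
Context {R : realType}.
Local Notation mu := (@lebesgue_measure R).
Local Notation I := (@I01 R).

Lemma mI : measurable I.
Proof. exact: measurable_itv. Qed.

Lemma muI : mu I = 1%E.
Proof. by rewrite /I01 lebesgue_measure_itv/= lte_fin ltr01 oppr0 adde0. Qed.

Lemma inIE u : (u \in I) = (0 <= u < 1).
Proof. by apply/idP/idP; rewrite in_setE /I01 /= in_itv. Qed.

Lemma IE u : I u <-> (0 <= u < 1).
Proof. by rewrite /I01/= in_itv. Qed.

Lemma bdd_int (f : R -> R) (M : R) : measurable_fun I f -> (forall x, I x -> `|f x| <= M) ->
  mu.-integrable I (EFin \o f).
Proof.
move=> mf fM; apply: (@measurable_bounded_integrable _ _ _ mu f I mI) => //.
- by change (mu I < +oo)%E; rewrite muI ltry.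
- exists M; split; first exact: num_real.
  move=> y My x Ix; exact: le_trans (fM x Ix) (ltW My).
Qed.


Lemma L2_int (f : R -> R) : inL2 f -> mu.-integrable I (EFin \o f).
Proof.
case=> mf fi.
have i1 : mu.-integrable I (EFin \o (cst 1 : R -> R)).
  apply: (bdd_int (M := 1)); first exact: measurable_cst.
  by move=> x _; rewrite normr1.
have i2 : mu.-integrable I (EFin \o (fun x => f x ^+ 2)).
  apply/integrableP; split; first exact/measurable_EFinP/measurable_funX.
  apply: le_lt_trans fi; rewrite le_eqVlt; apply/orP; left; apply/eqP.
  by apply: eq_integral => x _ /=; rewrite ger0_norm// sqr_ge0.
have : mu.-integrable I ((EFin \o (cst 1 : R -> R)) \+ (EFin \o (fun x => f x ^+ 2))).
  by apply: integrableD => //; exact: measurable_itv.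
apply: le_integrable; [exact: measurable_itv| exact/measurable_EFinP|].
move=> x Ix /=; rewrite lee_fin.
rewrite -(real_normK (num_real (f x))) (ger0_norm (x := 1 + _)); last by rewrite addr_ge0 ?sqr_ge0.
have := normr_ge0 (f x); set a := `|f x|; nra.
Qed.

Lemma int_bddM (f g : R -> R) M : mu.-integrable I (EFin \o f) ->
  measurable_fun I g -> (forall x, I x -> `|g x| <= M) ->
  mu.-integrable I (EFin \o (fun x => f x * g x)).
Proof.
move=> fi mg gM.
have bd : [bounded g x | x in I].
  exists M; split; first exact: num_real.
  move=> y My x Ix; exact: le_trans (gM x Ix) (ltW My).
have : mu.-integrable I (fun x => ((f x)%:E * (g x)%:E)%E).
  by apply: integrableMl => //; exact: measurable_itv.
apply: eq_integrable; first exact: measurable_itv.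
by move=> x _ /=; rewrite EFinM.
Qed.

Lemma bdd_inL2 (f : R -> R) M : measurable_fun I f ->
  (forall x, I x -> `|f x| <= M) -> inL2 f.
Proof.
move=> mf fM; split => //.
have := int_bddM (bdd_int mf fM) mf fM.
move=> /integrableP[_]; apply: le_lt_trans.
rewrite le_eqVlt; apply/orP; left; apply/eqP.
by apply: eq_integral => x _ /=; rewrite ger0_norm// -expr2 sqr_ge0.
Qed.

Lemma left_lim (f : R -> R) : (forall u v, I u -> I v -> u <= v -> f u <= f v) ->
  forall u, 0 < u < 1 -> cvg (f x @[x --> u^'-]).
Proof.
move=> nd u /andP[u0 u1]; apply: nondecreasing_at_left_is_cvgr.
- near=> x => y z /andP[xy yu] /andP[xz zu] yz.
  apply: nd => //; apply/IE; apply/andP; split.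
  + apply: ltW; apply: le_lt_trans xy; near: x; exact: nbhs_left_ge.
  + exact: lt_trans u1.
  + apply: ltW; apply: le_lt_trans xz; near: x; exact: nbhs_left_ge.
  + exact: lt_trans u1.
- near=> x; exists (f u) => _ [y /andP[xy yu] <-].
  apply: nd => //.
  + apply/IE; apply/andP; split; last exact: lt_trans u1.
    apply: ltW; apply: le_lt_trans xy; near: x; exact: nbhs_left_ge.
  + by apply/IE; rewrite ltW.
  + exact: ltW.
Unshelve. all: by end_near. Qed.

End Aux.

Section Conv.
Context {R : realType} (chi : R -> R) (L : R).
Context (Lip : forall x y, 0 <= x -> 0 <= y -> `|chi x - chi y| <= L * `|x - y|).
Context (nd : nondecreasing_Rplus chi) (cv : convex_Rplus chi).

Definition Qs a h := (chi (a + h) - chi a) / h.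
Definition Ss a := [set Qs a h | h in [set h : R | 0 < h]].
Definition Dd a := inf (Ss a).

Lemma L_ge0 : 0 <= L.
Proof.
have := Lip (x:=1) (y:=0) ler01 (lexx 0).
rewrite subr0 normr1 mulr1; apply: le_trans; exact: normr_ge0.
Qed.

Lemma slope b a c : 0 <= b -> b < a -> a < c ->
  (chi a - chi b) * (c - a) <= (chi c - chi a) * (a - b).
Proof.
move=> b0 ba ac.
have cb : 0 < c - b by rewrite subr_gt0 (lt_trans ba ac).
have cb0 : c - b != 0 by rewrite gt_eqF.
set t := (c - a) / (c - b).
have t01 : 0 <= t <= 1.
  apply/andP; split; first by apply: divr_ge0; rewrite subr_ge0 ltW // (lt_trans ba ac).
  by rewrite /t ler_pdivrMr // mul1r lerD2l lerN2 ltW.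
have := @cv b c t b0 (le_trans b0 (ltW (lt_trans ba ac))) t01.
rewrite (_ : t * b + (1 - t) * c = a); last by rewrite /t; field.
move=> H.
have e1 : t * (c - b) = c - a by rewrite /t divfK.
have e2 : (1 - t) * (c - b) = a - b by rewrite mulrBl mul1r e1; ring.
have H2 : chi a * (c - b) <= chi b * (c - a) + chi c * (a - b).
  have : chi a * (c - b) <= (t * chi b + (1 - t) * chi c) * (c - b) by rewrite ler_pM2r.
  move=> /le_trans; apply; rewrite -e1 -e2 le_eqVlt; apply/orP; left; apply/eqP; ring.
nra.
Qed.


Lemma Q_ge0 a h : 0 <= a -> 0 < h -> 0 <= Qs a h.
Proof.
move=> a0 h0; apply: divr_ge0; last exact: ltW.
by rewrite subr_ge0 nd // lerDl ltW.
Qed.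

Lemma Q_le a h : 0 <= a -> 0 < h -> Qs a h <= L.
Proof.
move=> a0 h0; rewrite /Qs ler_pdivrMr //.
apply: le_trans (ler_norm _) _.
have := Lip (x := a + h) (y := a) (addr_ge0 a0 (ltW h0)) a0.
by rewrite [a + h - a]addrC addKr (gtr0_norm h0) mulrC.
Qed.

Lemma S_lb a : 0 <= a -> lbound (Ss a) 0.
Proof. by move=> a0 _ [h h0 <-]; exact: Q_ge0. Qed.

Lemma S_ne a : Ss a !=set0.
Proof. by exists (Qs a 1); exists 1 => //=; exact: ltr01. Qed.

Lemma D_ge0 a : 0 <= a -> 0 <= Dd a.
Proof. by move=> a0; apply: lb_le_inf; [exact: S_ne | exact: S_lb]. Qed.

Lemma D_leQ a h : 0 <= a -> 0 < h -> Dd a <= Qs a h.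
Proof.
move=> a0 h0; apply: ge_inf; first by exists 0; exact: S_lb.
by exists h.
Qed.

Lemma D_le a : 0 <= a -> Dd a <= L.
Proof. by move=> a0; apply: le_trans (D_leQ a0 ltr01) (Q_le a0 ltr01). Qed.

Lemma D_geslope b a : 0 <= b -> b < a -> (chi a - chi b) / (a - b) <= Dd a.
Proof.
move=> b0 ba; apply: lb_le_inf; first exact: S_ne.
move=> _ [h h0 <-]; rewrite /Qs.
have ab : 0 < a - b by rewrite subr_gt0.
rewrite ler_pdivrMr // mulrAC ler_pdivlMr //.
have := slope b0 ba (_ : a < a + h); rewrite [a + h - a]addrC addKr; apply; by rewrite ltrDl.
Qed.

Lemma sub_grad a b : 0 <= a -> 0 <= b -> Dd a * (b - a) <= chi b - chi a.
Proof.
move=> a0 b0; case: (ltgtP b a) => [ba|ab|->]; last by rewrite !subrr mulr0.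
- have ab0 : 0 < a - b by rewrite subr_gt0.
  have := D_geslope b0 ba; rewrite ler_pdivrMr // => H.
  nra.
- have ba0 : 0 < b - a by rewrite subr_gt0.
  have := D_leQ a0 ba0; rewrite /Qs [a + (b - a)]addrC subrK ler_pdivlMr //.
Qed.

Lemma D_mono a a' : 0 <= a -> a <= a' -> Dd a <= Dd a'.
Proof.
move=> a0; rewrite le_eqVlt => /predU1P[->//|aa].
have d0 : 0 < a' - a by rewrite subr_gt0.
apply: le_trans (D_leQ a0 d0) _; rewrite /Qs [a + (a' - a)]addrC subrK.
exact: D_geslope.
Qed.


Lemma D_rc a e : 0 <= a -> 0 < e ->
  exists2 d, 0 < d & forall a', a <= a' -> a' - a < d -> Dd a' <= Dd a + e.
Proof.
move=> a0 e0.
have e2 : 0 < e / 2 by rewrite divr_gt0.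
have Dlt : Dd a < Dd a + e / 2 by rewrite ltrDl.
have [_ [h h0 <-] Hh] := @inf_lt _ (Ss a) (Dd a + e / 2) (S_ne a) Dlt.
rewrite /= in h0.
have K0 : 0 < L + 1 by rewrite ltr_wpDl ?L_ge0.
exists (e * h / (4 * (L + 1))).
  by rewrite divr_gt0 ?mulr_gt0.
move=> a' aa' ad.
have a'0 : 0 <= a' := le_trans a0 aa'.
apply: le_trans (D_leQ a'0 h0) _.
have an : `|a' - a| = a' - a by rewrite ger0_norm // subr_ge0.
have H1 : chi (a' + h) - chi (a + h) <= L * (a' - a).
  have := Lip (addr_ge0 a'0 (ltW h0)) (addr_ge0 a0 (ltW h0)).
  rewrite opprD addrACA subrr addr0 an.
  exact: le_trans (ler_norm _).
have H2 : chi a - chi a' <= L * (a' - a).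
  have := Lip a0 a'0; rewrite (distrC a) an.
  exact: le_trans (ler_norm _).
have H3 : L * (a' - a) <= (L + 1) * (a' - a).
  by rewrite ler_wpM2r ?subr_ge0 // lerDl.
have H4 : (a' - a) * (4 * (L + 1)) < e * h.
  by rewrite -ltr_pdivlMr ?mulr_gt0.
have H5 : chi (a + h) - chi a < (Dd a + e / 2) * h.
  by rewrite -ltr_pdivrMr.
rewrite /Qs ler_pdivrMr //.
nra.
Qed.

End Conv.

Section Fwd.
Context {R : realType} (chi : R -> R) (L : R).
Context (Lip : forall x y, 0 <= x -> 0 <= y -> `|chi x - chi y| <= L * `|x - y|).
Context (nd : nondecreasing_Rplus chi) (cv : convex_Rplus chi).
Local Notation mu := (@lebesgue_measure R).
Local Notation I := (@I01 R).

Definition Dp (x : R) := Dd chi (Num.max x 0).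

Lemma max0_ge0 (x : R) : 0 <= Num.max x 0.
Proof. by rewrite le_max lexx orbT. Qed.

Lemma Dp_nd : {homo Dp : x y / x <= y}.
Proof.
move=> x y xy; apply: (D_mono nd cv); first exact: max0_ge0.
by rewrite le_max2.
Qed.

Lemma Dp_bd x : `|Dp x| <= L.
Proof.
rewrite ger0_norm; last exact/(D_ge0 nd)/max0_ge0.
exact/(D_le Lip nd)/max0_ge0.
Qed.

Lemma s_inQ2 q : inQ2 q -> inQ2 (fun u => Dp (q u)).
Proof.
case=> qnd qrc qll q0 [qm qL2].
have snd : forall u v, u \in I -> v \in I -> u <= v -> Dp (q u) <= Dp (q v).
  by move=> u v uI vI uv; apply: Dp_nd; exact: qnd.
have sm : measurable_fun I (fun u => Dp (q u)).
  apply: (measurableT_comp (f := Dp)) => //.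
  exact: nondecreasing_measurable Dp_nd.
split => //.
- move=> u uI; apply/cvgrPdist_le => e e0.
  have qu0 := q0 u uI.
  have [d d0 Hd] := D_rc Lip nd qu0 e0.
  have := qrc u uI; move=> /cvgrPdist_lt /(_ d d0) Hq.
  have /IE/andP[u0 u1] : I u by exact/set_mem.
  near=> x.
  have ux : u < x by near: x; exact: nbhs_right_gt.
  have x1 : x < 1 by near: x; exact: nbhs_right_lt.
  have xI : x \in I by apply/mem_set/IE; rewrite (le_trans u0) ?ltW.
  have qux : q u <= q x by apply: qnd => //; exact: ltW.
  rewrite /Dp (max_l qu0) (max_l (le_trans qu0 qux)).
  rewrite ler0_norm; last first.
    by rewrite subr_le0; apply: (D_mono nd cv).
  rewrite opprB lerBlDl; apply: Hd => //.
  have : `|q u - q x| < d by near: x.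
  by rewrite distrC ger0_norm // subr_ge0.
- move=> u uu; apply: (left_lim _ uu) => v w vI wI vw.
  by apply: snd => //; exact/mem_set.
- by move=> u uI; exact/(D_ge0 nd)/max0_ge0.
- by apply: (bdd_inL2 (M := L)) => // x _; exact: Dp_bd.
Unshelve. all: by end_near. Qed.


Lemma chiq_int q : inQ2 q -> mu.-integrable I (EFin \o (fun u => chi (q u))).
Proof.
case=> qnd qrc qll q0 [qm qL2].
have qi := L2_int (conj qm qL2).
have c1 : mu.-integrable I (EFin \o (cst `|chi 0| : R -> R)).
  apply: (bdd_int (f := cst `|chi 0|) (M := `|chi 0|)); first exact: measurable_cst.
  by move=> y _; rewrite /= normr_id.
have c2 : mu.-integrable I (EFin \o (fun u => q u * L)).
  by apply: (int_bddM (g := cst L) (M := `|L|)).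
have : mu.-integrable I ((EFin \o (cst `|chi 0| : R -> R)) \+ (EFin \o (fun u => q u * L))).
  by apply: integrableD => //; exact: measurable_itv.
apply: le_integrable; [exact: measurable_itv| |].
  apply/measurable_EFinP.
  have cm : measurable_fun [set: R] (fun x : R => chi (Num.max x 0)).
    apply: nondecreasing_measurable => // x y xy.
    by apply: nd; [exact: max0_ge0 | exact: le_max2].
  apply: eq_measurable_fun (measurableT_comp cm qm).
  move=> x xI /=; rewrite max_l //; exact: q0.
move=> x xI /=; rewrite lee_fin.
have qx0 : 0 <= q x by apply: q0; exact/mem_set.
rewrite [X in _ <= X]ger0_norm; last by rewrite addr_ge0 // mulr_ge0 // (L_ge0 Lip).
have := Lip qx0 (lexx 0); rewrite subr0 (ger0_norm qx0) => H.
apply: le_trans (_ : `|chi 0| + `|chi (q x) - chi 0| <= _).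
  by rewrite -[X in `|X|](subrK (chi 0)) addrC; apply: ler_normD.
by rewrite lerD2l mulrC.
Qed.

Lemma forward : Q2dual_nondecreasing (Xfun chi).
Proof.
move=> q q' Hq Hq' [pL2 pdual].
have H0 := pdual _ (s_inQ2 Hq); rewrite /L2inner in H0.
have iq := chiq_int Hq; have iq' := chiq_int Hq'.
have sm : measurable_fun I (fun u => Dp (q u)) by case: (s_inQ2 Hq) => _ _ _ _ [].
rewrite /Xfun -subr_ge0 -RintegralB //; last exact: measurable_itv.
apply: le_trans H0 _; apply: le_Rintegral; first exact: measurable_itv.
- by apply: (int_bddM (M := L)) => //; [exact: L2_int | move=> x _; exact: Dp_bd].
- have : mu.-integrable I (fun x => (chi (q' x))%:E - (chi (q x))%:E)%E.
    by apply: integrableB => //; exact: measurable_itv.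
  apply: eq_integrable; first exact: measurable_itv.
  by move=> x _ /=; rewrite EFinB.
- move=> x xI /=.
  case: Hq => _ _ _ q0 _; case: Hq' => _ _ _ q'0 _.
  have qx0 : 0 <= q x by apply: q0; exact/mem_set.
  have q'x0 : 0 <= q' x by apply: q'0; exact/mem_set.
  rewrite /Dp (max_l qx0) mulrC; exact: sub_grad.
Qed.

End Fwd.

Section Rev.
Context {R : realType}.
Local Notation mu := (@lebesgue_measure R).
Local Notation I := (@I01 R).

Definition ind (t u : R) : R := if t <= u then 1 else 0.
Definition step (a b t u : R) : R := a + (b - a) * ind t u.

Lemma ind_nd t : {homo ind t : u v / u <= v}.
Proof.
move=> u v uv; rewrite /ind; case: (leP t u) => tu.
  by rewrite (le_trans tu uv).
by case: (t <= v) => //; exact: ler01.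
Qed.

Lemma ind_ge0 t u : 0 <= ind t u.
Proof. by rewrite /ind; case: (t <= u) => //; exact: ler01. Qed.

Lemma ind_le1 t u : ind t u <= 1.
Proof. by rewrite /ind; case: (t <= u) => //; exact: ler01. Qed.

Lemma int_ind t : 0 <= t < 1 -> \int[mu]_(u in I) ind t u = 1 - t.
Proof.
case/andP=> t0 t1.
rewrite /Rintegral.
rewrite (_ : (fun u => (ind t u)%:E) = (fun u => (\1_(`[t, +oo[%classic) u)%:E)); last first.
  apply/funext => u; rewrite /ind indicE.
  have -> : (u \in `[t, +oo[%classic) = (t <= u).
    by apply/idP/idP; rewrite in_setE /= in_itv /= andbT.
  by case: (t <= u).
rewrite integral_indic //; last exact: measurable_itv.
rewrite (_ : _ `&` _ = `[t, 1[%classic); last first.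
  apply/seteqP; split => u /=; rewrite /I01 /= !in_itv /= ?andbT.
    by move=> [tu /andP[_ ->]]; rewrite tu.
  by move=> /andP[tu u1]; rewrite tu (le_trans t0 tu) u1.
change (fine (mu `[t, 1[%classic) = 1 - t).
by rewrite lebesgue_measure_itv /= lte_fin t1.
Qed.


Lemma step_nd a b t : a <= b -> {homo step a b t : u v / u <= v}.
Proof.
move=> ab u v uv; rewrite /step lerD2l ler_wpM2l ?subr_ge0 //.
exact: ind_nd.
Qed.

Lemma ind_meas t : measurable_fun [set: R] (ind t).
Proof. by apply: nondecreasing_measurable => //; exact: ind_nd. Qed.

Lemma step_meas a b t : a <= b -> measurable_fun [set: R] (step a b t).
Proof. by move=> ab; apply: nondecreasing_measurable => //; exact: step_nd. Qed.

Lemma step_bd a b t u : `|step a b t u| <= `|a| + `|b - a|.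
Proof.
apply: le_trans (ler_normD _ _) _; rewrite lerD2l normrM.
rewrite (ger0_norm (ind_ge0 t u)).
by rewrite ler_piMr ?normr_ge0 ?ind_le1.
Qed.

Lemma step_L2 a b t : a <= b -> inL2 (step a b t).
Proof.
move=> ab; apply: (bdd_inL2 (M := `|a| + `|b - a|)).
  exact: measurable_funTS (step_meas t ab).
by move=> x _; exact: step_bd.
Qed.

Lemma step_int a b t : 0 <= t < 1 ->
  \int[mu]_(u in I) step a b t u = a + (b - a) * (1 - t).
Proof.
move=> t01; rewrite /step RintegralD; last 3 first.
- exact: measurable_itv.
- apply: (bdd_int (f := cst a) (M := `|a|)); first exact: measurable_cst.
  by move=> y _.
- apply: (bdd_int (M := `|b - a|)).
    apply: measurable_funM; first exact: measurable_cst.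
    exact: measurable_funTS (ind_meas t).
  move=> y _; rewrite normrM (ger0_norm (ind_ge0 t y)).
  by rewrite ler_piMr ?normr_ge0 ?ind_le1.
rewrite Rintegral_cst; last exact: measurable_itv.
rewrite RintegralZl; last 2 first.
- exact: measurable_itv.
- apply: (bdd_int (M := 1)); first exact: measurable_funTS (ind_meas t).
  by move=> y _; rewrite ger0_norm ?ind_ge0 ?ind_le1.
rewrite int_ind //.
by change (a * fine (mu I) + (b - a) * (1 - t) = a + (b - a) * (1 - t)); rewrite muI mulr1.
Qed.

Lemma chi_step (chi : R -> R) a b t u : chi (step a b t u) = step (chi a) (chi b) t u.
Proof.
rewrite /step /ind; case: (t <= u); rewrite ?mulr1 ?mulr0 ?addr0 //.
by rewrite [a + _]addrC subrK [chi a + _]addrC subrK.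
Qed.

Lemma step_inQ2 a b t : 0 <= a -> a <= b -> inQ2 (step a b t).
Proof.
move=> a0 ab; split.
- by move=> u v _ _; exact: step_nd.
- move=> u uI; apply/cvgrPdist_le => e e0.
  case: (leP t u) => tu.
    near=> w.
    have uw : u < w by near: w; exact: nbhs_right_gt.
    have -> : step a b t w = step a b t u.
      by rewrite /step /ind tu (le_trans tu (ltW uw)).
    by rewrite subrr normr0 ltW.
  near=> w.
  have wt : w < t by near: w; exact: nbhs_right_lt.
  have -> : step a b t w = step a b t u.
    by rewrite /step /ind !ifF //; apply/negbTE; rewrite -ltNge.
  by rewrite subrr normr0 ltW.
- move=> u uu; apply: (left_lim _ uu) => v w _ _; exact: step_nd.
- move=> u _; rewrite /step addr_ge0 // mulr_ge0 ?ind_ge0 //.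
  by rewrite subr_ge0.
- exact: step_L2.
Unshelve. all: by end_near. Qed.

End Rev.

Section Key.
Context {R : realType}.
Local Notation mu := (@lebesgue_measure R).
Local Notation I := (@I01 R).

Lemma key (chi : R -> R) (H : Q2dual_nondecreasing (Xfun chi)) x y z t :
  0 <= x -> x <= y -> 0 <= z -> z <= y -> 0 <= t < 1 -> (0 < t -> x <= z) ->
  z <= t * x + (1 - t) * y ->
  chi z <= t * chi x + (1 - t) * chi y.
Proof.
move=> x0 xy z0 zy t01 txz zc.
have /andP[t0 t1] := t01.
have Hc : inQ2 (step z z 0) := step_inQ2 0 z0 (lexx z).
have Hs : inQ2 (step x y t) := step_inQ2 t x0 xy.
have ep : step x y t \- step z z 0 = step (x - z) (y - z) t.
  by apply/funext => u; rewrite /step /= subrr mul0r addr0; ring.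
have HX := H _ _ Hc Hs.
have e1 : Xfun chi (step z z 0) = chi z.
  rewrite /Xfun; under eq_Rintegral do rewrite chi_step.
  by rewrite step_int ?lexx ?ltr01 // subrr mul0r addr0.
have e2 : Xfun chi (step x y t) = chi x + (chi y - chi x) * (1 - t).
  by rewrite /Xfun; under eq_Rintegral do rewrite chi_step; rewrite step_int.
rewrite e1 e2 in HX.
suff : inQ2dual (step x y t \- step z z 0) by move=> /HX; nra.
rewrite ep; split; first by apply: step_L2; rewrite lerD2r.
move=> g [gnd _ _ g0 gL2].
set p := step (x - z) (y - z) t.
have tI : t \in I by apply/mem_set/IE; rewrite t0 t1.
set c := g t.
have c0 : 0 <= c by exact: g0.
have pm : measurable_fun I p by apply: measurable_funTS; apply: step_meas; rewrite lerD2r.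
have pbd : forall u, I u -> `|p u| <= `|x - z| + `|(y - z) - (x - z)|.
  by move=> u _; exact: step_bd.
have ipg : mu.-integrable I (EFin \o (fun u => p u * g u)).
  have := int_bddM (L2_int gL2) pm pbd.
  apply: eq_integrable; first exact: measurable_itv.
  by move=> u _ /=; rewrite mulrC.
have icp : mu.-integrable I (EFin \o (fun u => c * p u)).
  apply: (bdd_int (M := c * (`|x - z| + `|(y - z) - (x - z)|))).
    by apply: measurable_funM => //; exact: measurable_cst.
  by move=> u uI; rewrite normrM (ger0_norm c0) ler_wpM2l // pbd.
have : 0 <= \int[mu]_(u in I) (p u * g u - c * p u).
  apply: Rintegral_ge0 => u uI.
  have uI' : u \in I by exact/mem_set.
  have /IE/andP[u0 u1] := uI.
  rewrite /p /step /ind; case: (leP t u) => tu.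
    have gtu : c <= g u by apply: gnd.
    have : 0 <= y - z by rewrite subr_ge0.
    rewrite mulr1 [x - z + _]addrC subrK; nra.
  have gtu : g u <= c by apply: gnd => //; exact: ltW.
  have : x - z <= 0 by rewrite subr_le0 txz // (le_lt_trans u0).
  rewrite mulr0 addr0; nra.
rewrite RintegralB //; last exact: measurable_itv.
have ip : mu.-integrable I (EFin \o p) by exact: bdd_int pm pbd.
have -> : \int[mu]_(u in I) (c * p u) = c * \int[mu]_(u in I) p u.
  by apply: RintegralZl; [exact: measurable_itv| exact: ip].
rewrite /p step_int // subr_ge0 => Hpg.
rewrite /L2inner; apply: le_trans Hpg; apply: mulr_ge0 => //.
nra.
Qed.

End Key.

Theorem proposition4p4 (R : realType) (chi : R -> R) :
  lipschitz_Rplus chi ->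
  (Q2dual_nondecreasing (Xfun chi) <-> nondecreasing_Rplus chi /\ convex_Rplus chi).
Proof.
move=> [L Lip]; split; last by move=> [nd cv]; exact: forward Lip nd cv.
move=> H; split.
  move=> a b a0 ab.
  have h := @key R chi H b b a 0 (le_trans a0 ab) (lexx b) a0 ab.
  have h1 : ((0:R) <= 0) && ((0:R) < 1) by apply/andP; split; lra.
  have h2 : (0:R) < 0 -> b <= a by rewrite ltxx.
  have h3 : a <= 0 * b + (1 - 0) * b by lra.
  by have := h h1 h2 h3; rewrite mul0r add0r subr0 mul1r.
move=> x y t x0 y0 t01.
wlog xy : x y t x0 y0 t01 / x <= y.
  move=> WL; case: (leP x y) => [xy|yx]; first exact: WL.
  have t01' : 0 <= 1 - t <= 1.
    by move: t01 => /andP[t0 t1]; rewrite subr_ge0 t1 lerBlDr lerDl t0.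
  have := WL y x (1 - t) y0 x0 t01' (ltW yx).
  have -> : 1 - (1 - t) = t by ring.
  by rewrite addrC [(1 - t) * chi y + _]addrC.
have /andP[t0 t1] := t01.
case: (ltP t 1) => [tl1|tg1].
  apply: key => //.
  - by rewrite addr_ge0 // mulr_ge0 // subr_ge0.
  - nra.
  - by rewrite t0 tl1.
  - move=> _; nra.
have -> : t = 1 by apply/eqP; rewrite eq_le t1 tg1.
by rewrite subrr !mul0r !addr0 !mul1r.
Qed.
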